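(* Let $(\rho_0,p_0)$ solve the TOV system on $[0,R)$ with regular centre and mass function $m_0$. Suppose $r_s\in(0,R)$ satisfies $p_0(r_s)=0$, and set $M=m_0(r_s)>0$, with $\rho_0(r_s)>0$. For $\delta p_c$ near $0$, let $p_{\delta p_c}=p_0+\delta p$ be the deformed pressure of Theorem P1, and let $r_s(\delta p_c)$ be the zero of $p_{\delta p_c}$ near $r_s$ (with $r_s(0)=r_s$). Then $$\left.\frac{d r_s}{d\,\delta p_c}\right|_{0}=\frac{r_s^2\,(1-2M/r_s)^{3/2}\,e^{-2I_0(r_s)}}{\rho_0(r_s)\,M}>0,\qquad I_0(r)=\int_0^r g_0(s)\,ds,$$ and the compactness $\chi(\delta p_c)=2m_0(r_s(\delta p_c))/r_s(\delta p_c)$ satisfies $$\left.\frac{d\chi}{d\,\delta p_c}\right|_{0}=\frac{8\pi}{3}\,\bigl\{3\rho_0(r_s)-\bar\rho_0(r_s)\bigr\}\,r_s\,\left.\frac{d r_s}{d\,\delta p_c}\right|_{0},\qquad \bar\rho_0(r_s)=\frac{M}{\tfrac{4\pi}{3}r_s^3}.$$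
   Context: Units $G=c=1$. Mass function $m(r)=4\pi\int_0^r\rho(s)s^2ds$. $(\rho,p)$ ''solves the TOV system on $[0,R)$'' if $1-2m/r>0$ on $(0,R)$, $p\in C^1$, and $\frac{dp}{dr}=-\frac{[\rho+p][m+4\pi pr^3]}{r^2[1-2m/r]}$; ''regular centre'' means $\rho,p$ extend continuously to $r=0$. $g_0(r)=\frac{m_0+4\pi p_0r^3}{r^2[1-2m_0/r]}$. Theorem P1 deformation: with $D(r)=1+4\pi\delta p_c\int_0^r \frac{s e^{-2I_0(s)}}{\sqrt{1-2m_0(s)/s}}ds$, $\delta p(r)=\delta p_c\sqrt{1-2m_0(r)/r}\,e^{-2I_0(r)}/D(r)$; the density (and $m_0$) is unchanged. *)

(* Defs.v *)
From Stdlib Require Import Reals.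
From Coquelicot Require Import Coquelicot.
Open Scope R_scope.

Definition mass (rho : R -> R) (r : R) : R :=
  4 * PI * RInt (fun s => rho s * s ^ 2) 0 r.

(* TOV system on [0,R) with regular centre.  rho is taken continuous on
   [0,R) (right-continuous at 0 = regular centre); p is C^1 on (0,R),
   satisfies the TOV equation there, and extends continuously to r = 0. *)
Definition TOV_regular (rho p : R -> R) (Rr : R) : Prop :=
  (forall r, 0 < r < Rr -> 1 - 2 * mass rho r / r > 0) /\
  (forall r, 0 < r < Rr -> continuous rho r) /\
  (forall r, 0 < r < Rr -> continuous p r) /\
  (forall r, 0 < r < Rr ->
     is_derive p r
       (- ((rho r + p r) * (mass rho r + 4 * PI * p r * r ^ 3))
          / (r ^ 2 * (1 - 2 * mass rho r / r)))) /\
  (forall r, 0 < r < Rr -> continuous (Derive p) r) /\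
  filterlim rho (at_right 0) (locally (rho 0)) /\
  filterlim p (at_right 0) (locally (p 0)).

Definition g0 (rho p : R -> R) (r : R) : R :=
  (mass rho r + 4 * PI * p r * r ^ 3) / (r ^ 2 * (1 - 2 * mass rho r / r)).

Definition I0 (rho p : R -> R) (r : R) : R := RInt (g0 rho p) 0 r.

Definition Ddef (rho p : R -> R) (dpc r : R) : R :=
  1 + 4 * PI * dpc *
      RInt (fun s => s * exp (-2 * I0 rho p s) / sqrt (1 - 2 * mass rho s / s)) 0 r.

Definition delta_p (rho p : R -> R) (dpc r : R) : R :=
  dpc * sqrt (1 - 2 * mass rho r / r) * exp (-2 * I0 rho p r) / Ddef rho p dpc r.

Definition p_def (rho p : R -> R) (dpc r : R) : R := p r + delta_p rho p dpc r.

Definition zero_branch (rho p : R -> R) (Rr rs : R) (rsf : R -> R) : Prop :=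
  rsf 0 = rs /\ continuous rsf 0 /\
  exists eps : R, 0 < eps /\
    forall dpc, Rabs dpc < eps ->
      0 < rsf dpc < Rr /\ p_def rho p dpc (rsf dpc) = 0.

(* Main.v *)
Require Import Defs.
From Stdlib Require Import Reals Lra ClassicalEpsilon Ranalysis5.
From Coquelicot Require Import Coquelicot.
Open Scope R_scope.
Lemma cpt_elim f x : continuity_pt f x -> forall eps, 0<eps -> exists d, 0<d /\ forall y, Rabs (y-x) < d -> Rabs (f y - f x) < eps.
Proof.
  intros H eps Heps. destruct (H eps Heps) as [d [Hd H2]]. exists d; split; auto.
  intros y Hy. destruct (Req_dec y x) as [->|Hne].
  - rewrite Rminus_diag, Rabs_R0; auto.
  - apply (H2 y). split. split. exact I. auto. exact Hy.
Qed.
Lemma cpt_intro f x : (forall eps, 0<eps -> exists d, 0<d /\ forall y, Rabs (y-x) < d -> Rabs (f y - f x) < eps) -> continuity_pt f x.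
Proof.
  intros H eps Heps. destruct (H eps Heps) as [d [Hd H2]]. exists d; split; auto.
  intros y [_ Hy]. apply H2. exact Hy.
Qed.
Lemma ball_R (x e y : R) : ball x e y <-> Rabs (y - x) < e.
Proof. unfold ball; simpl; unfold AbsRing_ball, abs, minus, plus, opp; simpl. tauto. Qed.
Lemma cont_cpt f x : continuous f x -> continuity_pt f x.
Proof. intros; apply continuity_pt_filterlim; auto. Qed.
Lemma cpt_cont f x : continuity_pt f x -> continuous f x.
Proof. intros; apply continuity_pt_filterlim; auto. Qed.
Lemma cpt_loc (f g : R->R) x d : 0 < d -> (forall y, Rabs (y - x) < d -> f y = g y) -> continuity_pt f x -> continuity_pt g x.
Proof.
  intros Hd He Hc. apply cont_cpt. apply (continuous_ext_loc g f).
  - exists (mkposreal d Hd). intros y Hy. apply ball_R in Hy. simpl in Hy. now apply He.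
  - apply cpt_cont; auto.
Qed.
Lemma RInt_correctR (f : R -> R) a b : ex_RInt f a b -> is_RInt f a b (RInt f a b).
Proof. exact (RInt_correct (V:=R_CompleteNormedModule) f a b). Qed.

Definition ext (f : R -> R) s := if Rle_dec s 0 then f 0 else f s.
Lemma ext_cont0 f : filterlim f (at_right 0) (locally (f 0)) -> continuity_pt (ext f) 0.
Proof.
  intros H. apply cpt_intro. intros eps Heps.
  apply filterlim_locally with (eps := mkposreal eps Heps) in H.
  destruct H as [d Hd]. exists d. split. apply cond_pos. intros y Hy.
  unfold ext. destruct (Rle_dec 0 0); [|lra]. destruct (Rle_dec y 0).
  rewrite Rminus_diag, Rabs_R0; auto.
  apply ball_R. apply Hd. apply ball_R; auto. lra.
Qed.
Lemma ext_cont f x : filterlim f (at_right 0) (locally (f 0)) -> (0 < x -> continuity_pt f x) -> continuity_pt (ext f) x.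
Proof.
  intros H0 H. destruct (Rlt_le_dec 0 x) as [Hx|Hx].
  - apply (cpt_loc f) with (d := x). auto. intros y Hy. unfold ext.
    destruct (Rle_dec y 0). apply Rabs_def2 in Hy. lra. auto. auto.
  - destruct Hx as [Hx| ->].
    + apply (cpt_loc (fun _ => f 0)) with (d := -x). lra. intros y Hy. unfold ext.
      apply Rabs_def2 in Hy. destruct (Rle_dec y 0); auto; lra.
      apply continuity_pt_const. intros a b; auto.
    + apply ext_cont0; auto.
Qed.

Lemma cpt_const c x : continuity_pt (fun _ => c) x.
Proof. apply continuity_pt_const. intros a b; auto. Qed.
Lemma cpt_id x : continuity_pt (fun y => y) x.
Proof. apply derivable_continuous_pt, derivable_pt_id. Qed.
Lemma cpt_plus f g x : continuity_pt f x -> continuity_pt g x -> continuity_pt (fun y => f y + g y) x.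
Proof. intros; exact (continuity_pt_plus f g x H H0). Qed.
Lemma cpt_minus f g x : continuity_pt f x -> continuity_pt g x -> continuity_pt (fun y => f y - g y) x.
Proof. intros; exact (continuity_pt_minus f g x H H0). Qed.
Lemma cpt_mult f g x : continuity_pt f x -> continuity_pt g x -> continuity_pt (fun y => f y * g y) x.
Proof. intros; exact (continuity_pt_mult f g x H H0). Qed.
Lemma cpt_opp f x : continuity_pt f x -> continuity_pt (fun y => - f y) x.
Proof. intros; exact (continuity_pt_opp f x H). Qed.
Lemma cpt_div f g x : continuity_pt f x -> continuity_pt g x -> g x <> 0 -> continuity_pt (fun y => f y / g y) x.
Proof. intros; exact (continuity_pt_div f g x H H0 H1). Qed.
Lemma cpt_comp f g x : continuity_pt g x -> continuity_pt f (g x) -> continuity_pt (fun y => f (g y)) x.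
Proof. intros; exact (continuity_pt_comp g f x H H0). Qed.
Lemma cpt_exp f x : continuity_pt f x -> continuity_pt (fun y => exp (f y)) x.
Proof. intros; apply (cpt_comp exp f); auto. apply derivable_continuous_pt, derivable_pt_exp. Qed.
Lemma cpt_sqrt f x : continuity_pt f x -> 0 < f x -> continuity_pt (fun y => sqrt (f y)) x.
Proof. intros; apply (cpt_comp sqrt f); auto. apply sqrt_continuity_pt; auto. Qed.
Lemma cpt_pow2 x : continuity_pt (fun y => y ^ 2) x.
Proof. apply (cpt_mult (fun y => y) (fun y => y ^ 1)). apply cpt_id.
  apply (cpt_mult (fun y => y) (fun _ => 1)). apply cpt_id. apply cpt_const. Qed.

Section TOV.
Variables (rho p : R -> R) (Rr : R).
Hypothesis HR : 0 < Rr.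
Hypothesis Hpos : forall r, 0 < r < Rr -> 1 - 2 * mass rho r / r > 0.
Hypothesis Hrc : forall r, 0 < r < Rr -> continuous rho r.
Hypothesis Hpc : forall r, 0 < r < Rr -> continuous p r.
Hypothesis Hpd : forall r, 0 < r < Rr ->
     is_derive p r
       (- ((rho r + p r) * (mass rho r + 4 * PI * p r * r ^ 3))
          / (r ^ 2 * (1 - 2 * mass rho r / r))).
Hypothesis Hdc : forall r, 0 < r < Rr -> continuous (Derive p) r.
Hypothesis Hr0 : filterlim rho (at_right 0) (locally (rho 0)).
Hypothesis Hp0 : filterlim p (at_right 0) (locally (p 0)).

Lemma rt_cont x : x < Rr -> continuity_pt (ext rho) x.
Proof. intros Hx. apply ext_cont; auto. intros; apply cont_cpt, Hrc; lra. Qed.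
Lemma pt_cont x : x < Rr -> continuity_pt (ext p) x.
Proof. intros Hx. apply ext_cont; auto. intros; apply cont_cpt, Hpc; lra. Qed.

Definition phi s := ext rho s * s ^ 2.
Lemma phi_cont x : x < Rr -> continuity_pt phi x.
Proof. intros; apply cpt_mult. apply rt_cont; auto. apply cpt_pow2. Qed.

Lemma int_of (f : R -> R) a b : (forall x, x < Rr -> continuity_pt f x) -> a < Rr -> b < Rr -> ex_RInt f a b.
Proof.
  intros Hf Ha Hb. apply (ex_RInt_continuous (V:=R_CompleteNormedModule)). intros z Hz. apply cpt_cont, Hf.
  destruct Hz as [_ Hz]. eapply Rle_lt_trans. apply Hz. apply Rmax_lub_lt; auto.
Qed.

Lemma der_of (f : R -> R) x : (forall x, x < Rr -> continuity_pt f x) -> x < Rr ->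
  is_derive (RInt f 0) x (f x).
Proof.
  intros Hf Hx. apply (is_derive_RInt f (RInt f 0) 0 x).
  - assert (Hd : 0 < Rr - x) by lra. exists (mkposreal _ Hd). intros b Hb.
    apply ball_R in Hb. simpl in Hb. apply RInt_correctR, int_of; auto.
    apply Rabs_def2 in Hb. destruct Hb. unfold minus, plus, opp in *; simpl in *. lra.
  - apply cpt_cont, Hf; auto.
Qed.

Lemma int_cont (f : R -> R) x : (forall x, x < Rr -> continuity_pt f x) -> x < Rr ->
  continuity_pt (RInt f 0) x.
Proof.
  intros. apply derivable_continuous_pt. exists (f x). apply is_derive_Reals. apply der_of; auto.
Qed.

Definition Mt r := 4 * PI * RInt phi 0 r.
Lemma Mt_der x : x < Rr -> is_derive Mt x (4 * PI * phi x).
Proof. intros. apply is_derive_scal. apply der_of; auto. apply phi_cont. Qed.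
Lemma Mt_cont x : x < Rr -> continuity_pt Mt x.
Proof. intros. apply cpt_mult. apply cpt_const. apply int_cont; auto. apply phi_cont. Qed.
Lemma mass_Mt r : 0 <= r < Rr -> mass rho r = Mt r.
Proof.
  intros Hr. unfold mass, Mt. f_equal. apply RInt_ext. intros x Hx.
  rewrite Rmin_left in Hx by lra. rewrite Rmax_right in Hx by lra.
  unfold phi, ext. destruct (Rle_dec x 0); auto; lra.
Qed.

Lemma Mt_small : exists K eta, 0 < eta /\ 0 <= K /\ forall s, 0 < s < eta -> Rabs (Mt s) <= K * s ^ 3.
Proof.
  destruct (cpt_elim _ _ (rt_cont 0 HR) 1 Rlt_0_1) as [d [Hd Hb]].
  exists (4 * PI * (Rabs (rho 0) + 1)), (Rmin d Rr). split. apply Rmin_glb_lt; auto.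
  split. generalize PI_RGT_0 (Rabs_pos (rho 0)); intros; nra.
  intros s Hs. assert (Hs1 : s < d) by (eapply Rlt_le_trans; [apply Hs| apply Rmin_l]).
  assert (Hs2 : s < Rr) by (eapply Rlt_le_trans; [apply Hs| apply Rmin_r]).
  assert (HI := norm_RInt_le_const phi 0 s (RInt phi 0 s) ((Rabs (rho 0) + 1) * s ^ 2)).
  assert (HI' : Rabs (RInt phi 0 s) <= (s - 0) * ((Rabs (rho 0) + 1) * s ^ 2)).
  { apply HI. lra.
    - intros x Hx. change (norm (phi x)) with (Rabs (phi x)). unfold phi.
      rewrite Rabs_mult. assert (Hx2 : Rabs (x - 0) < d) by (rewrite Rminus_0_r, Rabs_right; lra).
      specialize (Hb x Hx2). unfold ext at 2 in Hb. destruct (Rle_dec 0 0); [|lra].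
      assert (Rabs (ext rho x) <= Rabs (rho 0) + 1).
      { revert Hb. generalize (ext rho x) (rho 0). intros a b. unfold Rabs; repeat destruct Rcase_abs; lra. }
      rewrite (Rabs_right (x ^ 2)) by (apply Rle_ge, pow2_ge_0).
      apply Rmult_le_compat; auto. apply Rabs_pos. apply pow2_ge_0. nra.
    - apply RInt_correctR, int_of; auto. apply phi_cont. }
  unfold Mt. rewrite Rabs_mult. rewrite (Rabs_right (4 * PI)) by (generalize PI_RGT_0; lra).
  generalize PI_RGT_0; intros. 
  replace (4 * PI * (Rabs (rho 0) + 1) * s ^ 3) with (4 * PI * ((s - 0) * ((Rabs (rho 0) + 1) * s ^ 2))) by ring.
  apply Rmult_le_compat_l; lra.
Qed.

Definition psi s := if Rle_dec s 0 then 0 else Mt s / s ^ 2.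
Lemma psi_cont x : x < Rr -> continuity_pt psi x.
Proof.
  intros Hx. destruct (Rlt_le_dec 0 x) as [H0|H0].
  - apply (cpt_loc (fun s => Mt s / s ^ 2)) with (d := x); auto.
    intros y Hy. apply Rabs_def2 in Hy. unfold psi. destruct (Rle_dec y 0); [lra|auto].
    apply cpt_div. apply Mt_cont; auto. apply cpt_pow2. apply pow_nonzero; lra.
  - destruct H0 as [H0| ->].
    + apply (cpt_loc (fun _ => 0)) with (d := -x). lra.
      intros y Hy. apply Rabs_def2 in Hy. unfold psi. destruct (Rle_dec y 0); auto; lra.
      apply cpt_const.
    + destruct Mt_small as [K [eta [He [HK Hb]]]].
      apply cpt_intro. intros eps Heps.
      exists (Rmin eta (eps / (K + 1))). split.
      { apply Rmin_glb_lt; auto. apply Rdiv_lt_0_compat; lra. }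
      intros y Hy. unfold psi at 2. destruct (Rle_dec 0 0); [|lra].
      unfold psi. destruct (Rle_dec y 0). rewrite Rminus_0_r, Rabs_R0; auto.
      rewrite Rminus_0_r in *. rewrite Rabs_right in Hy by lra.
      assert (Hy1 : y < eta) by (eapply Rlt_le_trans; [apply Hy|apply Rmin_l]).
      assert (Hy2 : y < eps / (K + 1)) by (eapply Rlt_le_trans; [apply Hy|apply Rmin_r]).
      specialize (Hb y (conj (Rnot_le_lt _ _ n) Hy1)).
      assert (Hy0 : 0 < y) by lra.
      set (z := Mt y / y ^ 2).
      assert (Hz : Mt y = z * y ^ 2) by (unfold z; field; lra).
      rewrite Hz in Hb. rewrite Rabs_mult, (Rabs_right (y ^ 2)) in Hb by (apply Rle_ge, pow2_ge_0).
      assert (Hzz : Rabs z <= K * y).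
      { assert (0 < y ^ 2) by (apply pow_lt; lra). 
        apply Rmult_le_reg_r with (y ^ 2); auto. replace (K * y * y ^ 2) with (K * y ^ 3) by ring. auto. }
      assert (Hk : (K + 1) * y < eps).
      { apply Rmult_lt_reg_r with (/ (K + 1)). apply Rinv_0_lt_compat; lra.
        replace ((K + 1) * y * / (K + 1)) with y by (field; lra). exact Hy2. }
      nra.
Qed.

Definition om s := 1 - 2 * s * psi s.
Lemma om_eq s : 0 < s < Rr -> om s = 1 - 2 * mass rho s / s.
Proof. intros Hs. unfold om, psi. destruct (Rle_dec s 0); [lra|]. rewrite mass_Mt by lra. field. lra. Qed.
Lemma om_pos s : s < Rr -> 0 < om s.
Proof.
  intros Hs. destruct (Rle_dec s 0).
  - unfold om, psi. destruct (Rle_dec s 0); [|lra]. lra.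
  - rewrite om_eq by lra. apply Hpos; lra.
Qed.
Lemma om_cont x : x < Rr -> continuity_pt om x.
Proof.
  intros. unfold om. apply cpt_minus. apply cpt_const.
  apply cpt_mult. apply (cpt_mult (fun _ => 2) (fun y => y)). apply cpt_const. apply cpt_id.
  apply psi_cont; auto.
Qed.

Definition gt s := (psi s + 4 * PI * ext p s * s) / om s.
Lemma gt_cont x : x < Rr -> continuity_pt gt x.
Proof.
  intros. unfold gt. apply cpt_div. apply cpt_plus. apply psi_cont; auto.
  apply cpt_mult. apply cpt_mult. apply cpt_const. apply pt_cont; auto. apply cpt_id.
  apply om_cont; auto. apply Rgt_not_eq, om_pos; auto.
Qed.
Lemma g0_eq s : 0 < s < Rr -> g0 rho p s = gt s.
Proof.
  intros Hs. unfold g0, gt. rewrite om_eq by auto. assert (H1 := Hpos s Hs).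
  unfold psi, ext. destruct (Rle_dec s 0); [lra|]. rewrite mass_Mt in * by lra.
  assert (Hq : s - 2 * Mt s = s * (1 - 2 * Mt s / s)) by (field; lra).
  assert (0 < s * (1 - 2 * Mt s / s)) by (apply Rmult_lt_0_compat; lra).
  field. split; lra.
Qed.

Definition It r := RInt gt 0 r.
Lemma It_cont x : x < Rr -> continuity_pt It x.
Proof. intros. apply int_cont; auto. apply gt_cont. Qed.
Lemma I0_eq r : 0 <= r < Rr -> I0 rho p r = It r.
Proof.
  intros Hr. unfold I0, It. apply RInt_ext. intros x Hx.
  rewrite Rmin_left in Hx by lra. rewrite Rmax_right in Hx by lra. apply g0_eq; lra.
Qed.

Definition ht s := s * exp (-2 * It s) / sqrt (om s).
Lemma ht_cont x : x < Rr -> continuity_pt ht x.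
Proof.
  intros. unfold ht. apply cpt_div. apply cpt_mult. apply cpt_id.
  apply cpt_exp. apply cpt_mult. apply cpt_const. apply It_cont; auto.
  apply cpt_sqrt. apply om_cont; auto. apply om_pos; auto.
  apply Rgt_not_eq, sqrt_lt_R0, om_pos; auto.
Qed.
Definition Jt r := RInt ht 0 r.
Lemma Jt_cont x : x < Rr -> continuity_pt Jt x.
Proof. intros. apply int_cont; auto. apply ht_cont. Qed.
Lemma D_eq dpc r : 0 <= r < Rr -> Ddef rho p dpc r = 1 + 4 * PI * dpc * Jt r.
Proof.
  intros Hr. unfold Ddef, Jt. f_equal. f_equal. apply RInt_ext. intros x Hx.
  rewrite Rmin_left in Hx by lra. rewrite Rmax_right in Hx by lra.
  unfold ht. rewrite I0_eq, om_eq by lra. reflexivity.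
Qed.

Definition ft r := sqrt (om r) * exp (-2 * It r).
Lemma ft_cont x : x < Rr -> continuity_pt ft x.
Proof.
  intros. unfold ft. apply cpt_mult. apply cpt_sqrt. apply om_cont; auto. apply om_pos; auto.
  apply cpt_exp. apply cpt_mult. apply cpt_const. apply It_cont; auto.
Qed.
Lemma ft_pos x : x < Rr -> 0 < ft x.
Proof. intros. unfold ft. apply Rmult_lt_0_compat. apply sqrt_lt_R0, om_pos; auto. apply exp_pos. Qed.
Lemma dp_eq dpc r : 0 < r < Rr -> p_def rho p dpc r = p r + dpc * ft r / (1 + 4 * PI * dpc * Jt r).
Proof.
  intros Hr. unfold p_def, delta_p. rewrite D_eq by lra. rewrite I0_eq by lra. rewrite <- om_eq by lra.
  unfold ft, Rdiv. ring.
Qed.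
Lemma pder x : 0 < x < Rr -> is_derive p x (Derive p x).
Proof. intros. pose proof (Hpd x H). rewrite (is_derive_unique _ _ _ H0). auto. Qed.

Variable rs : R.
Hypothesis Hrs : 0 < rs < Rr.
Hypothesis Hprs : p rs = 0.
Hypothesis HM : 0 < mass rho rs.
Hypothesis Hrho : 0 < rho rs.

Definition d0 := - ((rho rs + p rs) * (mass rho rs + 4 * PI * p rs * rs ^ 3))
          / (rs ^ 2 * (1 - 2 * mass rho rs / rs)).
Lemma d0_der : is_derive p rs d0.
Proof. exact (Hpd rs Hrs). Qed.
Lemma d0_neg : d0 < 0.
Proof.
  unfold d0. rewrite Hprs. assert (H := Hpos rs Hrs).
  assert (0 < rs ^ 2 * (1 - 2 * mass rho rs / rs)) by (apply Rmult_lt_0_compat; [apply pow_lt|]; lra).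
  assert (0 < (rho rs + 0) * (mass rho rs + 4 * PI * 0 * rs ^ 3) / (rs ^ 2 * (1 - 2 * mass rho rs / rs))).
  { apply Rdiv_lt_0_compat; auto. apply Rmult_lt_0_compat; lra. }
  replace (- ((rho rs + 0) * (mass rho rs + 4 * PI * 0 * rs ^ 3)) / (rs ^ 2 * (1 - 2 * mass rho rs / rs)))
   with (- ((rho rs + 0) * (mass rho rs + 4 * PI * 0 * rs ^ 3) / (rs ^ 2 * (1 - 2 * mass rho rs / rs)))) by (unfold Rdiv; ring).
  lra.
Qed.

Lemma abs_bound a F : Rabs (a - F) < 1 -> Rabs a <= Rabs F + 1.
Proof. unfold Rabs; repeat destruct Rcase_abs; lra. Qed.

Lemma near_rs : exists eta, 0 < eta /\ eta <= rs / 2 /\ eta <= (Rr - rs) / 2 /\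
  forall r, Rabs (r - rs) < eta -> Derive p r < d0 / 2 /\ Rabs (ft r) <= Rabs (ft rs) + 1 /\
    Rabs (Jt r) <= Rabs (Jt rs) + 1.
Proof.
  assert (Hd0 := d0_neg).
  assert (HD : continuity_pt (Derive p) rs) by (apply cont_cpt, Hdc; auto).
  assert (HDv : Derive p rs = d0) by (apply is_derive_unique, d0_der).
  destruct (cpt_elim _ _ HD (- d0 / 2)) as [d1 [Hd1 H1]]. lra.
  destruct (cpt_elim _ _ (ft_cont rs (proj2 Hrs)) 1) as [d2 [Hd2 H2]]. lra.
  destruct (cpt_elim _ _ (Jt_cont rs (proj2 Hrs)) 1) as [d3 [Hd3 H3]]. lra.
  exists (Rmin (Rmin d1 d2) (Rmin d3 (Rmin (rs / 2) ((Rr - rs) / 2)))).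
  split; [|split; [|split]].
  - repeat apply Rmin_glb_lt; lra.
  - eapply Rle_trans; [apply Rmin_r|]. eapply Rle_trans; [apply Rmin_r|]. apply Rmin_l.
  - eapply Rle_trans; [apply Rmin_r|]. eapply Rle_trans; [apply Rmin_r|]. apply Rmin_r.
  - intros r Hr. split; [|split].
  + assert (Hr1 : Rabs (r - rs) < d1).
    { eapply Rlt_le_trans; [apply Hr|]. eapply Rle_trans; apply Rmin_l. }
    specialize (H1 r Hr1). rewrite HDv in H1. apply Rabs_def2 in H1. lra.
  + apply abs_bound, H2. eapply Rlt_le_trans; [apply Hr|].
    eapply Rle_trans; [apply Rmin_l|]. apply Rmin_r.
  + apply abs_bound, H3. eapply Rlt_le_trans; [apply Hr|].
    eapply Rle_trans; [apply Rmin_r|]. apply Rmin_l.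
Qed.

Lemma abs_le_iff x a : Rabs x <= a <-> - a <= x <= a.
Proof. unfold Rabs; destruct Rcase_abs; split; intros; lra. Qed.

Lemma exists_branch : exists rsf, zero_branch rho p Rr rs rsf.
Proof.
  destruct near_rs as [eta [He [He1 [He2 Hn]]]].
  assert (Hd0 := d0_neg). generalize PI_RGT_0; intro HPI.
  set (c := - d0 / 2). set (F := Rabs (ft rs) + 1). set (B := Rabs (Jt rs) + 1).
  assert (Hc : 0 < c) by (unfold c; lra).
  assert (HF : 1 <= F) by (unfold F; generalize (Rabs_pos (ft rs)); lra).
  assert (HB : 1 <= B) by (unfold B; generalize (Rabs_pos (Jt rs)); lra).
  set (k := (2 * F + 1) / c).
  assert (Hk : 0 < k) by (unfold k; apply Rdiv_lt_0_compat; lra).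
  assert (Hck : c * k = 2 * F + 1) by (unfold k; field; lra).
  set (eps := Rmin (1 / (8 * PI * B)) (eta / (2 * k))).
  assert (Heps : 0 < eps).
  { apply Rmin_glb_lt; apply Rdiv_lt_0_compat; try lra. apply Rmult_lt_0_compat; lra. }
  assert (Heps1 : 4 * PI * (eps * B) <= 1 / 2).
  { assert (eps <= 1 / (8 * PI * B)) by apply Rmin_l.
    assert (eps * (8 * PI * B) <= 1).
    { apply Rmult_le_reg_r with (/ (8 * PI * B)). apply Rinv_0_lt_compat. nra.
      rewrite Rmult_assoc, Rinv_r, Rmult_1_r by nra. lra. }
    nra. }
  assert (Heps2 : k * eps <= eta / 2).
  { assert (eps <= eta / (2 * k)) by apply Rmin_r.
    apply Rmult_le_compat_l with (r := k) in H; [|lra].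
    replace (k * (eta / (2 * k))) with (eta / 2) in H by (field; lra). auto. }
  assert (Hcl : forall dl, exists r, Rabs dl < eps ->
            Rabs (r - rs) <= k * Rabs dl /\ p_def rho p dl r = 0).
  { intros dl. destruct (Rlt_dec (Rabs dl) eps) as [Hdl|Hdl]; [|exists rs; intro; contradiction].
    destruct (Req_dec dl 0) as [->|Hnz].
    { exists rs. intros _. split. rewrite Rminus_diag, !Rabs_R0; lra.
      unfold p_def, delta_p. rewrite Hprs. unfold Rdiv; ring. }
    set (a := k * Rabs dl).
    assert (Ha : 0 < a) by (unfold a; apply Rmult_lt_0_compat; auto; apply Rabs_pos_lt; auto).
    assert (Ha2 : a <= eta / 2).
    { unfold a. eapply Rle_trans; [|apply Heps2]. apply Rmult_le_compat_l; lra. }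
    set (q := fun r => p r + dl * ft r / (1 + 4 * PI * dl * Jt r)).
    assert (Hbnd : forall r, Rabs (r - rs) <= a ->
       1 / 2 <= 1 + 4 * PI * dl * Jt r /\
       Rabs (dl * ft r / (1 + 4 * PI * dl * Jt r)) <= 2 * F * Rabs dl).
    { intros r Hr. destruct (Hn r) as [_ [HFr HBr]]. lra. fold F in HFr. fold B in HBr.
      assert (HX : Rabs (dl * Jt r) <= eps * B).
      { rewrite Rabs_mult. apply Rmult_le_compat; try apply Rabs_pos; lra. }
      apply abs_le_iff in HX.
      assert (HD : 1 / 2 <= 1 + 4 * PI * dl * Jt r).
      { replace (4 * PI * dl * Jt r) with (4 * PI * (dl * Jt r)) by ring. nra. }
      split; auto.
      unfold Rdiv. rewrite !Rabs_mult, Rabs_inv, (Rabs_right (1 + _)) by lra.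
      assert (Hinv : / (1 + 4 * PI * dl * Jt r) <= 2).
      { replace 2 with (/ (1 / 2)) by field. apply Rinv_le_contravar; lra. }
      assert (0 < / (1 + 4 * PI * dl * Jt r)) by (apply Rinv_0_lt_compat; lra).
      replace (2 * F * Rabs dl) with (Rabs dl * F * 2) by ring.
      apply Rmult_le_compat; try apply Rmult_le_pos; try apply Rabs_pos; try lra.
      apply Rmult_le_compat_l; auto. apply Rabs_pos. }
    assert (Hin : forall r, Rabs (r - rs) <= a -> 0 < r < Rr).
    { intros r Hr. apply abs_le_iff in Hr. lra. }
    assert (HL : p (rs - a) > c * a).
    { destruct (MVT_gen p (rs - a) rs (Derive p)) as [x [Hx Heq]].
      - intros x Hx. simpl in Hx. rewrite Rmin_left, Rmax_right in Hx by lra.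
        apply pder; lra.
      - intros x Hx. simpl in Hx. rewrite Rmin_left, Rmax_right in Hx by lra.
        apply cont_cpt, Hpc; lra.
      - rewrite Rmin_left, Rmax_right in Hx by lra.
        destruct (Hn x) as [HDx _]. apply Rabs_def1; lra.
        rewrite Hprs in Heq. unfold c. nra. }
    assert (HRt : p (rs + a) < - c * a).
    { destruct (MVT_gen p rs (rs + a) (Derive p)) as [x [Hx Heq]].
      - intros x Hx. simpl in Hx. rewrite Rmin_left, Rmax_right in Hx by lra.
        apply pder; lra.
      - intros x Hx. simpl in Hx. rewrite Rmin_left, Rmax_right in Hx by lra.
        apply cont_cpt, Hpc; lra.
      - rewrite Rmin_left, Rmax_right in Hx by lra.
        destruct (Hn x) as [HDx _]. apply Rabs_def1; lra.
        rewrite Hprs in Heq. unfold c. nra. }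
    assert (Hca : c * a = (2 * F + 1) * Rabs dl) by (unfold a; rewrite <- Hck; ring).
    assert (Hdlp : 0 < Rabs dl) by (apply Rabs_pos_lt; auto).
    assert (Hq1 : q (rs - a) > 0).
    { destruct (Hbnd (rs - a)) as [_ Hb]. replace (rs - a - rs) with (- a) by ring.
      rewrite Rabs_Ropp, Rabs_right; lra.
      apply abs_le_iff in Hb. unfold q. lra. }
    assert (Hq2 : q (rs + a) < 0).
    { destruct (Hbnd (rs + a)) as [_ Hb]. replace (rs + a - rs) with a by ring.
      rewrite Rabs_right; lra.
      apply abs_le_iff in Hb. unfold q. lra. }
    destruct (IVT_interv (fun r => - q r) (rs - a) (rs + a)) as [z [Hz Hqz]].
    - intros r Hr. assert (Hr' : Rabs (r - rs) <= a) by (apply abs_le_iff; lra).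
      destruct (Hin r Hr'). destruct (Hbnd r Hr') as [HD _].
      apply cpt_opp. unfold q. apply cpt_plus. apply cont_cpt, Hpc; lra.
      apply cpt_div. apply cpt_mult. apply cpt_const. apply ft_cont; lra.
      apply cpt_plus. apply cpt_const. apply cpt_mult. apply cpt_const. apply Jt_cont; lra.
      lra.
    - lra.
    - lra.
    - lra.
    - exists z. intros _. assert (Hz' : Rabs (z - rs) <= a) by (apply abs_le_iff; lra).
      split; auto. rewrite dp_eq by (apply Hin; auto). fold (q z). lra. }
  set (rsf := fun dl => proj1_sig (constructive_indefinite_description _ (Hcl dl))).
  assert (Hspec : forall dl, Rabs dl < eps -> Rabs (rsf dl - rs) <= k * Rabs dl /\ p_def rho p dl (rsf dl) = 0).
  { intros dl. unfold rsf. destruct (constructive_indefinite_description _ (Hcl dl)) as [r Hr]. simpl. auto. }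
  assert (H0 : rsf 0 = rs).
  { destruct (Hspec 0) as [H _]. rewrite Rabs_R0; auto. rewrite Rabs_R0, Rmult_0_r in H.
    apply abs_le_iff in H. lra. }
  exists rsf. split; [auto|split].
  - apply cpt_cont, cpt_intro. intros e He'. exists (Rmin eps (e / (k + 1))). split.
    { apply Rmin_glb_lt; auto. apply Rdiv_lt_0_compat; lra. }
    intros y Hy. rewrite Rminus_0_r in Hy. rewrite H0.
    assert (Hy1 : Rabs y < eps) by (eapply Rlt_le_trans; [apply Hy|apply Rmin_l]).
    assert (Hy2 : Rabs y < e / (k + 1)) by (eapply Rlt_le_trans; [apply Hy|apply Rmin_r]).
    destruct (Hspec y Hy1) as [Hb _].
    assert (Hk2 : (k + 1) * Rabs y < e).
    { apply Rmult_lt_reg_r with (/ (k + 1)). apply Rinv_0_lt_compat; lra.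
      replace ((k + 1) * Rabs y * / (k + 1)) with (Rabs y) by (field; lra).
      replace (e * / (k + 1)) with (e / (k + 1)) by reflexivity. auto. }
    generalize (Rabs_pos y). nra.
  - exists eps. split; auto. intros dl Hdl. destruct (Hspec dl Hdl) as [Hb Hz].
    split; auto. apply abs_le_iff in Hb.
    assert (k * Rabs dl <= k * eps) by (apply Rmult_le_compat_l; lra). lra.
Qed.

Definition S r := if Req_EM_T r rs then d0 else (p r - p rs) / (r - rs).
Lemma S_cont : continuity_pt S rs.
Proof.
  apply cpt_intro. intros e He. pose proof d0_der as Hd. apply is_derive_Reals in Hd.
  destruct (Hd e He) as [del Hdel]. exists del. split; [apply cond_pos|]. intros y Hy.
  unfold S. destruct (Req_EM_T rs rs); [|congruence]. destruct (Req_EM_T y rs).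
  - rewrite Rminus_diag, Rabs_R0; auto.
  - assert (Hn : y - rs <> 0) by lra. specialize (Hdel (y - rs) Hn Hy).
    replace (rs + (y - rs)) with y in Hdel by ring. exact Hdel.
Qed.
Lemma S_eq r : p r = S r * (r - rs).
Proof.
  unfold S. destruct (Req_EM_T r rs) as [e|n]. rewrite e, Hprs. ring. rewrite Hprs. field. lra.
Qed.

Lemma branch_deriv rsf : zero_branch rho p Rr rs rsf -> is_derive rsf 0 (- ft rs / d0).
Proof.
  intros [Hu0 [Huc [eps' [He' Hb]]]].
  assert (Hd0 := d0_neg).
  apply cont_cpt in Huc.
  set (Df := fun dl => 1 + 4 * PI * dl * Jt (rsf dl)).
  set (Sf := fun dl => S (rsf dl)).
  set (G := fun dl => - ft (rsf dl) / (Df dl * Sf dl)).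
  assert (HJc : continuity_pt (fun dl => Jt (rsf dl)) 0).
  { apply cpt_comp; auto. rewrite Hu0. apply Jt_cont; lra. }
  assert (HDc : continuity_pt Df 0).
  { unfold Df. apply cpt_plus. apply cpt_const. apply cpt_mult; auto.
    apply cpt_mult. apply cpt_const. apply cpt_id. }
  assert (HSc : continuity_pt Sf 0).
  { unfold Sf. apply cpt_comp; auto. rewrite Hu0. apply S_cont. }
  assert (HD0 : Df 0 = 1) by (unfold Df; ring).
  assert (HS0 : Sf 0 = d0).
  { unfold Sf, S. rewrite Hu0. destruct (Req_EM_T rs rs); [auto|congruence]. }
  assert (HGc : continuity_pt G 0).
  { unfold G. apply cpt_div. apply cpt_opp. apply cpt_comp; auto. rewrite Hu0. apply ft_cont; lra.
    apply cpt_mult; auto. rewrite HD0, HS0. lra. }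
  destruct (cpt_elim _ _ HDc (1 / 2)) as [dD [HdD HD]]. lra.
  destruct (cpt_elim _ _ HSc (- d0 / 2)) as [dS [HdS HS]]. lra.
  assert (HG0 : G 0 = - ft rs / d0).
  { unfold G at 1. rewrite HD0, HS0, Hu0. f_equal. ring. }
  rewrite <- HG0.
  apply is_derive_Reals. intros e He.
  destruct (cpt_elim _ _ HGc e He) as [dG [HdG HG]].
  assert (Hm : 0 < Rmin (Rmin eps' dD) (Rmin dS dG)) by (repeat apply Rmin_glb_lt; auto).
  exists (mkposreal _ Hm). intros h Hh0 Hh. simpl in Hh.
  assert (H1 : Rabs h < eps') by (eapply Rlt_le_trans; [apply Hh|]; eapply Rle_trans; apply Rmin_l).
  assert (H2 : Rabs (h - 0) < dD).
  { rewrite Rminus_0_r. eapply Rlt_le_trans; [apply Hh|]. eapply Rle_trans; [apply Rmin_l|apply Rmin_r]. }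
  assert (H3 : Rabs (h - 0) < dS).
  { rewrite Rminus_0_r. eapply Rlt_le_trans; [apply Hh|]. eapply Rle_trans; [apply Rmin_r|apply Rmin_l]. }
  assert (H4 : Rabs (h - 0) < dG).
  { rewrite Rminus_0_r. eapply Rlt_le_trans; [apply Hh|]. eapply Rle_trans; [apply Rmin_r|apply Rmin_r]. }
  specialize (HD h H2). specialize (HS h H3). specialize (HG h H4).
  rewrite HD0 in HD. rewrite HS0 in HS. apply Rabs_def2 in HD. apply Rabs_def2 in HS.
  assert (HDn : Df h <> 0) by lra. assert (HSn : Sf h <> 0) by lra.
  destruct (Hb h H1) as [Hrange Hz].
  rewrite dp_eq in Hz by auto. rewrite S_eq in Hz.
  change (Sf h * (rsf h - rs) + h * ft (rsf h) / Df h = 0) in Hz.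
  assert (Hu : rsf h - rs = - (h * ft (rsf h) / Df h) / Sf h).
  { apply Rmult_eq_reg_l with (Sf h); auto.
    replace (Sf h * (- (h * ft (rsf h) / Df h) / Sf h)) with (- (h * ft (rsf h) / Df h)) by (field; auto).
    lra. }
  rewrite Rplus_0_l, Hu0, Hu.
  replace (- (h * ft (rsf h) / Df h) / Sf h / h) with (G h) by (unfold G; field; auto).
  exact HG.
Qed.
End TOV.

Theorem mainTheorem3 (rho0 p0 : R -> R) (Rr rs : R) :
  TOV_regular rho0 p0 Rr ->
  0 < rs < Rr ->
  p0 rs = 0 ->
  0 < mass rho0 rs ->
  0 < rho0 rs ->
  let M := mass rho0 rs in
  let drs := rs ^ 2 * Rpower (1 - 2 * M / rs) (3 / 2) * exp (-2 * I0 rho0 p0 rs)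
             / (rho0 rs * M) in
  let rhobar := M / (4 * PI / 3 * rs ^ 3) in
  (exists rsf, zero_branch rho0 p0 Rr rs rsf) /\
  forall rsf, zero_branch rho0 p0 Rr rs rsf ->
    is_derive rsf 0 drs /\ 0 < drs /\
    is_derive (fun dpc => 2 * mass rho0 (rsf dpc) / rsf dpc) 0
      (8 * PI / 3 * (3 * rho0 rs - rhobar) * rs * drs).
Proof.
  intros [Hpos [Hrc [Hpc [Hpd [Hdc [Hr0 Hp0]]]]]] Hrs Hprs HM Hrho M drs rhobar.
  assert (HR : 0 < Rr) by lra.
  assert (Hx : 0 < 1 - 2 * M / rs) by (apply Hpos; auto).
  assert (HPI := PI_RGT_0).
  assert (Hdrs : drs = - ft rho0 p0 rs / d0 rho0 p0 rs).
  { unfold drs, ft, d0. rewrite (om_eq rho0 Rr rs Hrs).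
    rewrite (I0_eq rho0 p0 Rr Hpos rs) by lra.
    replace (3 / 2) with (1 + / 2) by field.
    rewrite Rpower_plus. rewrite (Rpower_1 _ Hx). rewrite (Rpower_sqrt _ Hx).
    rewrite Hprs. unfold M in *.
    assert (0 < sqrt (1 - 2 * mass rho0 rs / rs)) by (apply sqrt_lt_R0; lra).
    assert (Hq : rs - 2 * mass rho0 rs = rs * (1 - 2 * mass rho0 rs / rs)) by (field; lra).
    assert (0 < rs * (1 - 2 * mass rho0 rs / rs)) by (apply Rmult_lt_0_compat; lra).
    field. repeat split; lra. }
  split.
  { exact (exists_branch rho0 p0 Rr HR Hpos Hrc Hpc Hpd Hdc Hr0 Hp0 rs Hrs Hprs HM Hrho). }
  intros rsf Hbr.
  assert (Hd := branch_deriv rho0 p0 Rr HR Hpos Hrc Hpc Hpd Hr0 Hp0 rs Hrs Hprs HM Hrho rsf Hbr).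
  rewrite <- Hdrs in Hd.
  assert (Hdp : 0 < drs).
  { unfold drs. apply Rdiv_lt_0_compat; [|apply Rmult_lt_0_compat; auto].
    apply Rmult_lt_0_compat; [apply Rmult_lt_0_compat|apply exp_pos].
    apply pow_lt; lra. unfold Rpower; apply exp_pos. }
  split; [auto|split; [auto|]].
  destruct Hbr as [Hu0 _].
  assert (Hf : is_derive (fun r => 2 * mass rho0 r / r) rs
     ((2 * (4 * PI * phi rho0 rs) * rs - 2 * Mt rho0 rs * 1) / rs ^ 2)).
  { apply (is_derive_ext_loc (fun r => 2 * Mt rho0 r / r)).
    - assert (Hm : 0 < Rmin rs (Rr - rs)) by (apply Rmin_glb_lt; lra).
      exists (mkposreal _ Hm). intros t Ht. apply ball_R in Ht. simpl in Ht.
      apply Rabs_def2 in Ht. destruct Ht as [Ht1 Ht2]. unfold minus, plus, opp in *; simpl in *.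
      assert (Rmin rs (Rr - rs) <= rs) by apply Rmin_l.
      assert (Rmin rs (Rr - rs) <= Rr - rs) by apply Rmin_r.
      rewrite (mass_Mt rho0 Rr t) by lra. reflexivity.
    - apply (is_derive_div (fun r => 2 * Mt rho0 r) (fun r => r) rs). apply is_derive_scal. apply (Mt_der rho0 Rr HR Hrc Hr0). lra.
      apply is_derive_Reals, derivable_pt_lim_id. lra. }
  assert (Hf' : is_derive (fun r => 2 * mass rho0 r / r) (rsf 0)
     ((2 * (4 * PI * phi rho0 rs) * rs - 2 * Mt rho0 rs * 1) / rs ^ 2)) by (rewrite Hu0; exact Hf).
  pose proof (is_derive_comp _ _ 0 _ _ Hf' Hd) as Hc.
  assert (Hphi : phi rho0 rs = rho0 rs * rs ^ 2).
  { unfold phi, ext. destruct (Rle_dec rs 0); [lra|auto]. }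
  assert (HMt : Mt rho0 rs = M) by (unfold M; rewrite (mass_Mt rho0 Rr rs) by lra; auto).
  replace (8 * PI / 3 * (3 * rho0 rs - rhobar) * rs * drs) with
    (scal drs ((2 * (4 * PI * phi rho0 rs) * rs - 2 * Mt rho0 rs * 1) / rs ^ 2)).
  exact Hc.
  unfold scal; simpl; unfold mult; simpl. rewrite Hphi, HMt. unfold rhobar. field. lra.
Qed.
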